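(* Let $G$ be a simple graph of order $n$ with adjacency eigenvalues $\lambda_1,\lambda_2,\dots,\lambda_n$ (listed with multiplicity), and let $G^l$ be the graph obtained from $G$ by adding a loop on each vertex of $G$. Let $(G\cup G^l)_n$ denote the disjoint union of $G$ and $G^l$, a graph of order $2n$ with exactly $n$ self-loops. If $|\lambda_i|\ge \frac12$ for each $i=1,2,\dots,n$, then $E\big((G\cup G^l)_n\big)=2E(G)$.
   Context: For a simple graph $G$ with adjacency matrix $A(G)$ and eigenvalues $\lambda_1,\dots,\lambda_n$, the energy is $E(G)=\sum_{i=1}^n|\lambda_i|$. For a graph $G_\sigma$ of order $N$ obtained from a simple graph by attaching self-loops on $\sigma$ of its vertices, the adjacency matrix is $A(G_\sigma)=A(G)+I_\sigma$, where $I_\sigma$ is the $N\times N$ diagonal matrix with exactly $\sigma$ ones on the diagonal (at the looped vertices) and zeros elsewhere; if $\mu_1,\dots,\mu_N$ are the eigenvalues of $A(G_\sigma)$, its energy is $E(G_\sigma)=\sum_{i=1}^N\left|\mu_i-\frac{\sigma}{N}\right|$. The subscript in $(G\cup G^l)_n$ indicates the number of loops $\sigma=n$. *)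

(* Defs.v *)
From HB Require Import structures.
From mathcomp Require Import all_boot all_order all_algebra.
From mathcomp Require Import reals.
Set Implicit Arguments. Unset Strict Implicit. Unset Printing Implicit Defensive.
Import Order.TTheory GRing.Theory Num.Theory.
Local Open Scope ring_scope.

Section Defs.
Variable R : realType.

Definition adjmx n (e : rel 'I_n) : 'M[R]_n := \matrix_(i, j) (e i j)%:R.

Definition loopmx n (L : {set 'I_n}) : 'M[R]_n :=
  \matrix_(i, j) ((i == j) && (i \in L))%:R.

Definition is_eigenvalues n (A : 'M[R]_n) (s : seq R) : Prop :=
  char_poly A = \prod_(x <- s) ('X - x%:P).

Definition energy (s : seq R) : R := \sum_(x <- s) `|x|.

(* Energy of a graph of order N with sigma loops, from its eigenvalue list. *)
Definition loop_energy (N sigma : nat) (s : seq R) : R :=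
  \sum_(x <- s) `|x - sigma%:R / N%:R|.
End Defs.

(* Disjoint union of two copies of the graph e on 'I_n, on vertex set 'I_(n+n):
   first copy = lshift, second copy = rshift. *)
Definition dunion n (e : rel 'I_n) : rel 'I_(n + n) :=
  fun i j => match split i, split j with
             | inl a, inl b => e a b
             | inr a, inr b => e a b
             | _, _ => false
             end.

(* Loops on every vertex of the second copy (this copy is G^l). *)
Definition second_copy n : {set 'I_(n + n)} := [set i : 'I_(n + n) | (n <= i)%N].

(* Main.v *)
Require Import Defs.
From HB Require Import structures.
From mathcomp Require Import all_boot all_order all_algebra.
From mathcomp Require Import reals.
From mathcomp Require Import ring lra.
Import Order.TTheory GRing.Theory Num.Theory.
Local Open Scope ring_scope.

Lemma split_l n (a : 'I_n) : split (lshift n a) = inl a.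
Proof. exact: (unsplitK (inl a)). Qed.
Lemma split_r n (a : 'I_n) : split (rshift n a) = inr a.
Proof. exact: (unsplitK (inr a)). Qed.

Lemma block_eq (R : realType) n (e : rel 'I_n) :
  adjmx R (dunion e) + loopmx R (second_copy n) =
  block_mx (adjmx R e) 0 0 (adjmx R e + 1%:M).
Proof.
rewrite -[LHS]submxK; congr block_mx; apply/matrixP => i j;
  rewrite !mxE /dunion ?split_l ?split_r ?inE /= ?eq_lshift ?eq_rshift
  ?eq_rlshift ?eq_lrshift /=.
- by rewrite leqNgt ltn_ord andbF addr0.
- by rewrite addr0.
- by rewrite addr0.
- by rewrite leq_addr andbT.
Qed.

Lemma char_poly_block (R : comNzRingType) n (A B : 'M[R]_n) :
  char_poly (block_mx A 0 0 B) = char_poly A * char_poly B.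
Proof.
rewrite /char_poly /char_poly_mx map_block_mx (scalar_mx_block n n)
  opp_block_mx add_block_mx !map_mx0 !oppr0 !addr0.
exact: det_ublock.
Qed.

Lemma char_poly_shift (R : comNzRingType) n (A : 'M[R]_n) :
  char_poly (A + 1%:M) = char_poly A \Po ('X - 1).
Proof.
rewrite /char_poly -det_map_mx; congr (\det _).
apply/matrixP => i j; rewrite !mxE.
case: (i == j); rewrite /= ?mulr1n ?mulr0n ?addr0 ?raddfB /= ?comp_polyX
  ?comp_polyC ?polyCD ?polyC1 ?sub0r; try ring.
Qed.

Theorem theorem1 (R : realType) (n : nat) (e : rel 'I_n) :
  symmetric e -> irreflexive e ->
  forall (s t : seq R),
  is_eigenvalues (adjmx R e) s ->
  is_eigenvalues (adjmx R (dunion e) + loopmx R (second_copy n)) t ->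
  (forall x, x \in s -> 1 / 2 <= `|x|) ->
  loop_energy (n + n) n t = 2 * energy s.
Proof.
move=> _ _ s t Hs Ht Hx.
rewrite /is_eigenvalues block_eq char_poly_block char_poly_shift Hs in Ht.
have Hp : perm_eq t (s ++ map (fun x => x + 1) s).
  apply: prod_XsubC_eq; rewrite -Ht big_cat big_map /=; congr (_ * _).
  rewrite rmorph_prod; apply: eq_bigr => x _.
  rewrite raddfB /= comp_polyX comp_polyC polyCD polyC1; ring.
rewrite /loop_energy /energy (perm_big _ Hp) /= big_cat big_map /=.
case: n e Hs {Ht} => [|m] e Hs.
  have := size_char_poly (adjmx R e); rewrite Hs size_prod_XsubC.
  move/eqP; rewrite eqSS size_eq0 => /eqP ->.
  by rewrite !big_nil mulr0 ?addr0.
have -> : m.+1%:R / (m.+1 + m.+1)%:R = 1 / 2 :> R.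
  rewrite natrD -mulr2n -mulr_natr; field.
  by rewrite addrC natr1 pnatr_eq0.
rewrite -big_split mulr_sumr /=; apply: eq_big_seq => x xs.
have := Hx x xs.
have [x0|x0] := lerP 0 x.
  rewrite (ger0_norm x0) => H.
  rewrite (ger0_norm (x := x - 1/2)); last lra.
  rewrite (ger0_norm (x := x + 1 - 1/2)); last lra.
  lra.
rewrite (ltr0_norm x0) => H.
rewrite (ler0_norm (x := x - 1/2)); last lra.
rewrite (ler0_norm (x := x + 1 - 1/2)); last lra.
lra.
Qed.
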